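(* If $0\leq\alpha<1$ and $\beta\geq2$, then $T_{\alpha,\beta}$ is transitive.
   Context: $T_{\alpha,\beta}\colon[0,1]\to[0,1]$ is given by $T_{\alpha,\beta}(x)=\beta x+\alpha-\lfloor\beta x+\alpha\rfloor$ for $x\in[0,1)$ and $T_{\alpha,\beta}(1)=\lim_{x\nearrow1}T_{\alpha,\beta}(x)$. A map $T\colon[0,1]\to[0,1]$ is transitive if there is $x\in[0,1]$ whose forward orbit $\{T^n(x)\colon n\geq0\}$ is dense in $[0,1]$. *)

(* Defs.v *)
From Stdlib Require Import Reals.
Open Scope R_scope.

(* floor(x) as an integer: Int_part x = up x - 1, the greatest integer <= x. *)
Definition rfloor (x : R) : R := IZR (Int_part x).

Definition rceil (x : R) : R := - rfloor (- x).

(* The map T_{alpha,beta} on [0,1]: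
   T(x) = beta x + alpha - floor(beta x + alpha) for x in [0,1),
   T(1) = lim_{x -> 1^-} T(x) = (beta + alpha) - (ceil(beta + alpha) - 1)
   (left limit of the fractional part at beta + alpha, for beta > 0). *)
Definition T (alpha beta x : R) : R :=
  if Rlt_dec x 1 then beta * x + alpha - rfloor (beta * x + alpha)
  else (beta + alpha) - (rceil (beta + alpha) - 1).

Definition transitive_on01 (f : R -> R) : Prop :=
  exists x : R, 0 <= x <= 1 /\
    forall y eps : R, 0 <= y <= 1 -> 0 < eps ->
      exists n : nat, Rabs (Nat.iter n f x - y) < eps.

(* Main.v *)
Require Import Defs.
From Stdlib Require Import Reals Lra Lia ZArith Cantor ClassicalEpsilon.
Open Scope R_scope.

Lemma floor_unique (y : R) (k : Z) : IZR k <= y < IZR k + 1 -> rfloor y = IZR k.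
Proof.
  intros [H1 H2]. unfold rfloor. destruct (base_Int_part y) as [B1 B2].
  f_equal.
  assert (A1 : (Int_part y < k + 1)%Z) by (apply lt_IZR; rewrite plus_IZR; lra).
  assert (A2 : (k < Int_part y + 1)%Z) by (apply lt_IZR; rewrite plus_IZR; lra).
  lia.
Qed.

Lemma T_lt a b x : x < 1 -> T a b x = b * x + a - rfloor (b * x + a).
Proof. intros H. unfold T. destruct (Rlt_dec x 1); [reflexivity|lra]. Qed.

Lemma T_range a b y : 0 <= a < 1 -> 0 < b -> 0 <= y <= 1 -> 0 <= T a b y <= 1.
Proof.
  intros Ha Hb Hy. unfold T. destruct (Rlt_dec y 1).
  - unfold rfloor. destruct (base_Int_part (b*y+a)). lra.
  - unfold rceil, rfloor. destruct (base_Int_part (-(b+a))). lra.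
Qed.

Lemma iter_range a b n y : 0 <= a < 1 -> 0 < b -> 0 <= y <= 1 ->
  0 <= Nat.iter n (T a b) y <= 1.
Proof.
  intros Ha Hb Hy. induction n; simpl; [lra|]. apply T_range; auto.
Qed.

Fixpoint Cn (a : R) (n : nat) : R := match n with O => 0 | S m => 2 * Cn a m + a end.

Lemma T2_cong a y : 0 <= y <= 1 -> exists z : Z, T a 2 y = 2 * y + a + IZR z.
Proof.
  intros Hy. unfold T. destruct (Rlt_dec y 1).
  - exists (- Int_part (2*y+a))%Z. unfold rfloor. rewrite opp_IZR. lra.
  - exists (Int_part (-(2+a)) + 1)%Z. unfold rceil, rfloor. rewrite plus_IZR.
    assert (y = 1) by lra. subst. lra.
Qed.

Lemma iter2_cong a n x : 0 <= a < 1 -> 0 <= x <= 1 ->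
  exists z : Z, Nat.iter n (T a 2) x = 2 ^ n * x + Cn a n + IZR z.
Proof.
  intros Ha Hx. induction n.
  - exists 0%Z. simpl. lra.
  - destruct IHn as [z Hz]. simpl Nat.iter.
    destruct (T2_cong a (Nat.iter n (T a 2) x)) as [z' Hz'].
    { apply iter_range; auto; lra. }
    exists (2 * z + z')%Z. rewrite Hz', Hz, plus_IZR, mult_IZR. simpl. lra.
Qed.

Definition KLprop (al be : R) := forall a0 b0 u d, 0 <= a0 -> a0 < b0 -> b0 <= 1 -> 0 <= u -> 0 < d -> u + d < 1 ->
  exists n a' b', a0 <= a' /\ a' < b' /\ b' <= b0 /\
    forall x, a' <= x <= b' -> u <= Nat.iter n (T al be) x <= u + d.

Lemma int_small (m : Z) : -1 < IZR m < 1 -> m = 0%Z.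
Proof.
  intros [H1 H2]. apply lt_IZR in H1. apply lt_IZR in H2. lia.
Qed.

Lemma KL2 al : 0 <= al < 1 -> KLprop al 2.
Proof.
  intros Hal a0 b0 u d Ha0' Hab Hb1 Hu Hd Hud.
  destruct (Pow_x_infinity 2 ltac:(rewrite Rabs_pos_eq; lra) (2 / (b0 - a0))) as [N HN].
  specialize (HN N (le_n N)). rewrite Rabs_pos_eq in HN by (apply pow_le; lra).
  set (P := 2 ^ N) in *.
  assert (HP : 0 < P) by (apply pow_lt; lra).
  assert (HPb : P * (b0 - a0) >= 2).
  { apply Rle_ge. apply (Rmult_le_reg_r (/ (b0 - a0))). apply Rinv_0_lt_compat; lra.
    rewrite Rmult_assoc, Rinv_r by lra. unfold Rdiv in HN. lra. }
  set (C := Cn al N).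
  set (w := P * a0 + C).
  destruct (archimed (w - u - d/4)) as [K1 K2].
  set (k := IZR (up (w - u - d / 4))) in *.
  set (x0 := (k + u + d/4 - C) / P).
  assert (Ex0 : P * x0 = k + u + d/4 - C) by (unfold x0; field; lra).
  exists N, x0, (x0 + d / (4 * P)).
  assert (Ha0 : a0 < x0).
  { apply (Rmult_lt_reg_l P); auto. unfold w in *. lra. }
  assert (Hb0 : x0 + d / (4 * P) <= b0).
  { apply (Rmult_le_reg_l P); auto. rewrite Rmult_plus_distr_l.
    replace (P * (d / (4 * P))) with (d/4) by (field; lra).
    unfold w in *. lra. }
  assert (Hd4 : 0 < d / (4 * P)) by (apply Rdiv_lt_0_compat; lra).
  split; [lra|]. split; [lra|]. split; [lra|].
  intros x Hx.
  assert (Hx01 : 0 <= x <= 1) by lra.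
  destruct (iter2_cong al N x Hal Hx01) as [z Hz].
  pose proof (iter_range al 2 N x Hal ltac:(lra) Hx01) as Hr.
  fold P C in Hz.
  assert (HPx1 : P * x0 <= P * x) by (apply Rmult_le_compat_l; lra).
  assert (HPx2 : P * x <= P * x0 + d/4).
  { replace (d/4) with (P * (d / (4 * P))) by (field; lra).
    rewrite <- Rmult_plus_distr_l. apply Rmult_le_compat_l; lra. }
  assert (Hz0 : (up (w - u - d / 4) + z = 0)%Z).
  { apply int_small. rewrite plus_IZR. fold k. lra. }
  assert (IZR z = - k) by (unfold k; rewrite <- opp_IZR; f_equal; lia).
  lra.
Qed.

Definition Fullon al be n p q := forall x, p <= x < q -> Nat.iter n (T al be) x = (x - p) / (q - p).

Lemma step al be a b : 0 <= al < 1 -> 0 < be -> 0 <= a -> a < b -> b <= 1 ->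
  (exists p q, a <= p /\ p < q /\ q <= b /\ Fullon al be 1 p q) \/
  (exists a2 b2 c, a <= a2 /\ a2 < b2 /\ b2 <= b /\ 2 * (b2 - a2) >= b - a /\
     (forall x, a2 <= x < b2 -> T al be x = be * x + c) /\ 0 <= be * a2 + c /\ be * b2 + c <= 1).
Proof.
  intros Hal Hbe Ha Hab Hb.
  set (k := Int_part (be * a + al)).
  destruct (base_Int_part (be * a + al)) as [B1 B2]. fold k in B1, B2.
  set (K := IZR k) in *.
  set (e := (K + 1 - al) / be).
  assert (He : be * e = K + 1 - al) by (unfold e; field; lra).
  assert (Hae : a < e) by nra.
  destruct (Rle_lt_dec b e) as [Hbe1 | Hbe1].
  - right. exists a, b, (al - K). split; [lra|]. split; [lra|]. split; [lra|]. split; [lra|].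
    split; [|split; nra].
    intros x Hx. rewrite T_lt by lra. rewrite (floor_unique _ k); [unfold K; ring|].
    fold K. split; nra.
  - destruct (Rle_lt_dec (e + 1/be) b) as [Hf | Hf].
    + left. exists e, (e + 1/be). split; [lra|]. split.
      { assert (0 < 1/be) by (apply Rdiv_lt_0_compat; lra). lra. }
      split; [lra|].
      intros x Hx. simpl. rewrite T_lt by lra.
      rewrite (floor_unique _ (k+1)).
      * rewrite plus_IZR. fold K. replace (e + 1/be - e) with (1/be) by ring.
        replace ((x - e) / (1/be)) with (be * x - be * e) by (field; lra). lra.
      * rewrite plus_IZR. fold K. assert (be * x < be * (e + 1/be)) by nra.
        assert (be * (e + 1/be) = be * e + 1) by (field; lra). split; nra.
    + right. destruct (Rle_lt_dec (b - e) (e - a)).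
      * exists a, e, (al - K). split; [lra|]. split; [lra|]. split; [lra|]. split; [lra|].
        split; [|split; nra].
        intros x Hx. rewrite T_lt by lra. rewrite (floor_unique _ k); [unfold K; ring|].
        fold K. split; nra.
      * exists e, b, (al - K - 1). split; [lra|]. split; [lra|]. split; [lra|]. split; [lra|].
        split; [|split].
        -- intros x Hx. rewrite T_lt by lra. rewrite (floor_unique _ (k+1)); [rewrite plus_IZR; unfold K; ring|].
           rewrite plus_IZR. fold K. split; [nra|].
           assert (be * x < be * (e + 1/be)) by nra.
           assert (be * (e + 1/be) = be * e + 1) by (field; lra). nra.
        -- nra.
        -- assert (be * b < be * (e + 1/be)) by nra.
           assert (be * (e + 1/be) = be * e + 1) by (field; lra). nra.
Qed.

Lemma pullback al be n p q a2 b2 c : 0 < be -> p < q ->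
  be * a2 + c <= p -> q <= be * b2 + c ->
  (forall x, a2 <= x < b2 -> T al be x = be * x + c) ->
  Fullon al be n p q ->
  a2 <= (p - c) / be /\ (p - c) / be < (q - c) / be /\ (q - c) / be <= b2 /\
  Fullon al be (S n) ((p - c) / be) ((q - c) / be).
Proof.
  intros Hbe Hpq H1 H2 HT HF.
  assert (E1 : be * ((p - c) / be) = p - c) by (field; lra).
  assert (E2 : be * ((q - c) / be) = q - c) by (field; lra).
  split; [nra|]. split; [nra|]. split; [nra|].
  intros x Hx. rewrite Nat.iter_succ_r.
  assert (Hx2 : a2 <= x < b2) by nra.
  rewrite (HT x Hx2). rewrite HF by nra. field. split; lra.
Qed.

Lemma greedy al be : 0 <= al < 1 -> 2 < be -> forall N a b, 0 <= a -> a < b -> b <= 1 ->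
  (be / 2) ^ N * (b - a) > 1 ->
  exists n p q, a <= p /\ p < q /\ q <= b /\ Fullon al be n p q.
Proof.
  intros Hal Hbe N. induction N; intros a b Ha Hab Hb HN.
  - simpl in HN. lra.
  - destruct (step al be a b Hal ltac:(lra) Ha Hab Hb) as [[p [q Hpq]] | [a2 [b2 [c H]]]].
    + exists 1%nat, p, q. exact Hpq.
    + destruct H as (H1 & H2 & H3 & H4 & HT & H5 & H6).
      assert (Hpos : 0 < (be/2)^N) by (apply pow_lt; lra).
      destruct (IHN (be * a2 + c) (be * b2 + c) H5 ltac:(nra) H6) as [n [p [q (G1 & G2 & G3 & G4)]]].
      { simpl in HN.
        assert (be * b2 + c - (be * a2 + c) >= be / 2 * (b - a)) by nra. nra. }
      destruct (pullback al be n p q a2 b2 c ltac:(lra) G2 G1 G3 HT G4) as (P1 & P2 & P3 & P4).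
      exists (S n), ((p - c) / be), ((q - c) / be). split; [lra|]. split; [lra|]. split; [lra|]. exact P4.
Qed.

Lemma KLbig al be : 0 <= al < 1 -> 2 < be -> KLprop al be.
Proof.
  intros Hal Hbe a0 b0 u d Ha0 Hab Hb1 Hu Hd Hud.
  destruct (Pow_x_infinity (be/2) ltac:(rewrite Rabs_pos_eq; lra) (2 / (b0 - a0))) as [N HN].
  specialize (HN N (le_n N)). rewrite Rabs_pos_eq in HN by (apply pow_le; lra).
  assert (HP : (be/2)^N * (b0 - a0) > 1).
  { assert (E : 2 / (b0 - a0) * (b0 - a0) = 2) by (field; lra).
    assert ((be/2)^N * (b0 - a0) >= 2 / (b0 - a0) * (b0 - a0)) by (apply Rle_ge; apply Rmult_le_compat_r; lra).
    lra. }
  destruct (greedy al be Hal Hbe N a0 b0 Ha0 Hab Hb1 HP) as [n [p [q (G1 & G2 & G3 & G4)]]].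
  exists n, (p + u * (q - p)), (p + (u + d) * (q - p)).
  split; [nra|]. split; [nra|]. split; [nra|].
  intros x Hx. rewrite G4 by nra.
  split.
  - apply (Rmult_le_reg_r (q - p)); [lra|]. unfold Rdiv. rewrite Rmult_assoc, Rinv_l by lra. lra.
  - apply (Rmult_le_reg_r (q - p)); [lra|]. unfold Rdiv. rewrite Rmult_assoc, Rinv_l by lra. lra.
Qed.

Lemma target c r : 0 <= c <= 1 -> 0 < r -> exists u d, 0 <= u /\ 0 < d /\ u + d < 1 /\
  forall y, u <= y <= u + d -> Rabs (y - c) < r.
Proof.
  intros Hc Hr. destruct (Rle_lt_dec c (r/2)).
  - exists 0, (Rmin (r/2) (1/2)). pose proof (Rmin_l (r/2) (1/2)). pose proof (Rmin_r (r/2) (1/2)).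
    assert (0 < Rmin (r/2) (1/2)) by (apply Rmin_glb_lt; lra).
    split; [lra|]. split; [lra|]. split; [lra|]. intros y Hy. apply Rabs_def1; lra.
  - exists (c - r/2), (Rmin (r/2) ((1 - (c - r/2))/2)).
    pose proof (Rmin_l (r/2) ((1 - (c - r/2))/2)). pose proof (Rmin_r (r/2) ((1 - (c - r/2))/2)).
    assert (0 < Rmin (r/2) ((1 - (c - r/2))/2)) by (apply Rmin_glb_lt; lra).
    split; [lra|]. split; [lra|]. split; [lra|]. intros y Hy. apply Rabs_def1; lra.
Qed.

Lemma KLall al be : 0 <= al < 1 -> 2 <= be -> forall a0 b0 c r, 0 <= a0 -> a0 < b0 -> b0 <= 1 ->
  0 <= c <= 1 -> 0 < r -> exists n a' b', a0 <= a' /\ a' < b' /\ b' <= b0 /\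
    forall x, a' <= x <= b' -> Rabs (Nat.iter n (T al be) x - c) < r.
Proof.
  intros Hal Hbe a0 b0 c r H1 H2 H3 Hc Hr.
  destruct (target c r Hc Hr) as [u [d (U1 & U2 & U3 & U4)]].
  assert (HK : KLprop al be).
  { destruct (Rle_lt_or_eq_dec 2 be Hbe) as [Hlt | Heq].
    - apply KLbig; auto.
    - subst be. apply KL2; auto. }
  destruct (HK a0 b0 u d H1 H2 H3 U1 U2 U3) as [n [a' [b' (V1 & V2 & V3 & V4)]]].
  exists n, a', b'. split; [lra|]. split; [lra|]. split; [lra|].
  intros x Hx. apply U4. apply V4. exact Hx.
Qed.

Definition tgt (k : nat) : R * R :=
  let (i, j) := Cantor.of_nat k in (Rmin 1 (INR i / INR (S j)), 1 / INR (S j)).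

Lemma tgt_ok k : 0 <= fst (tgt k) <= 1 /\ 0 < snd (tgt k).
Proof.
  unfold tgt. destruct (Cantor.of_nat k) as [i j]. cbn [fst snd].
  assert (0 < INR (S j)) by (apply lt_0_INR; lia).
  assert (0 <= INR i) by apply pos_INR.
  split; [split|].
  - apply Rmin_glb; [lra|]. unfold Rdiv; apply Rmult_le_pos; [lra|]; left; apply Rinv_0_lt_compat; lra.
  - apply Rmin_l.
  - apply Rdiv_lt_0_compat; lra.
Qed.

Lemma stepex al be (Hal : 0 <= al < 1) (Hbe : 2 <= be) (ab : R * R) (k : nat) :
  exists ab' : R * R, (0 <= fst ab -> fst ab < snd ab -> snd ab <= 1 ->
    fst ab <= fst ab' /\ fst ab' < snd ab' /\ snd ab' <= snd ab /\
    exists n, forall x, fst ab' <= x <= snd ab' ->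
      Rabs (Nat.iter n (T al be) x - fst (tgt k)) < snd (tgt k)).
Proof.
  destruct (tgt_ok k) as [Hc Hr].
  destruct (classic (0 <= fst ab /\ fst ab < snd ab /\ snd ab <= 1)) as [[H1 [H2 H3]] | Hn].
  - destruct (KLall al be Hal Hbe (fst ab) (snd ab) _ _ H1 H2 H3 Hc Hr) as [n [a' [b' (V1 & V2 & V3 & V4)]]].
    exists (a', b'). intros _ _ _. simpl. split; [lra|]. split; [lra|]. split; [lra|]. exists n. exact V4.
  - exists ab. intros H1 H2 H3. exfalso. apply Hn. auto.
Qed.

Theorem propositionA1 (alpha beta : R) :
  0 <= alpha < 1 -> 2 <= beta -> transitive_on01 (T alpha beta).
Proof.
  intros Hal Hbe.
  set (stepf := fun (ab : R * R) (k : nat) =>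
          proj1_sig (constructive_indefinite_description _ (stepex alpha beta Hal Hbe ab k))).
  assert (Hstep : forall ab k, 0 <= fst ab -> fst ab < snd ab -> snd ab <= 1 ->
    fst ab <= fst (stepf ab k) /\ fst (stepf ab k) < snd (stepf ab k) /\ snd (stepf ab k) <= snd ab /\
    exists n, forall x, fst (stepf ab k) <= x <= snd (stepf ab k) ->
      Rabs (Nat.iter n (T alpha beta) x - fst (tgt k)) < snd (tgt k)).
  { intros ab k. unfold stepf. destruct (constructive_indefinite_description _ _) as [ab' H]. exact H. }
  set (I := fix I (k : nat) : R * R := match k with O => (0, 1) | S m => stepf (I m) m end).
  assert (Hval : forall k, 0 <= fst (I k) /\ fst (I k) < snd (I k) /\ snd (I k) <= 1).
  { induction k as [|k IH].
    - simpl. lra.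
    - destruct IH as (A1 & A2 & A3).
      destruct (Hstep (I k) k A1 A2 A3) as (B1 & B2 & B3 & _).
      change (I (S k)) with (stepf (I k) k). lra. }
  assert (Hmono : forall j k, (j <= k)%nat -> fst (I j) <= fst (I k) /\ snd (I k) <= snd (I j)).
  { intros j k Hjk. induction Hjk.
    - lra.
    - destruct (Hval m) as (A1 & A2 & A3).
      destruct (Hstep (I m) m A1 A2 A3) as (B1 & B2 & B3 & _).
      change (I (S m)) with (stepf (I m) m). lra. }
  set (E := fun y => exists k, y = fst (I k)).
  assert (HE1 : bound E).
  { exists 1. intros y [k Hk]. destruct (Hval k). lra. }
  assert (HE2 : exists y, E y) by (exists 0; exists O; reflexivity).
  destruct (completeness E HE1 HE2) as [m [Hub Hlub]].
  assert (Hin : forall k, fst (I k) <= m <= snd (I k)).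
  { intros k. split.
    - apply Hub. exists k. reflexivity.
    - apply Hlub. intros y [j Hj]. subst y.
      destruct (le_lt_dec j k) as [Hjk | Hjk].
      + destruct (Hmono j k Hjk). destruct (Hval k). lra.
      + destruct (Hmono k j ltac:(lia)). destruct (Hval j). lra. }
  exists m. split.
  { destruct (Hin O). simpl in *. lra. }
  intros y eps Hy Heps.
  destruct (archimed (2 / eps)) as [A1 _].
  set (j := Z.to_nat (up (2 / eps))).
  assert (Hj : INR (S j) > 2 / eps).
  { rewrite S_INR. unfold j. rewrite INR_IZR_INZ.
    destruct (Z_le_gt_dec 0 (up (2/eps))) as [Hz | Hz].
    - rewrite Z2Nat.id by exact Hz. lra.
    - assert (2 / eps > 0) by (apply Rdiv_lt_0_compat; lra).
      apply Z.gt_lt in Hz. apply IZR_lt in Hz. lra. }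
  assert (HSj : 0 < INR (S j)) by (apply lt_0_INR; lia).
  destruct (base_Int_part (y * INR (S j))) as [C1 C2].
  assert (Hz0 : (0 <= Int_part (y * INR (S j)))%Z).
  { assert (0 <= y * INR (S j)) by nra.
    assert (Hlt : IZR (-1) < IZR (Int_part (y * INR (S j)))) by lra.
    apply lt_IZR in Hlt. lia. }
  set (i := Z.to_nat (Int_part (y * INR (S j)))).
  assert (Hi : INR i = IZR (Int_part (y * INR (S j)))).
  { unfold i. rewrite INR_IZR_INZ, Z2Nat.id by exact Hz0. reflexivity. }
  set (k := Cantor.to_nat (i, j)).
  assert (Ht : tgt k = (Rmin 1 (INR i / INR (S j)), 1 / INR (S j))).
  { unfold tgt, k. rewrite Cantor.cancel_of_to. reflexivity. }
  destruct (Hval k) as (A1' & A2' & A3').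
  destruct (Hstep (I k) k A1' A2' A3') as (_ & _ & _ & [n Hn]).
  exists n.
  specialize (Hn m (Hin (S k))). rewrite Ht in Hn. cbn [fst snd] in Hn.
  assert (Hq1 : INR i / INR (S j) <= y).
  { apply (Rmult_le_reg_r (INR (S j))); auto. unfold Rdiv. rewrite Rmult_assoc, Rinv_l by lra. lra. }
  assert (Hq2 : y - 1 / INR (S j) < INR i / INR (S j)).
  { apply (Rmult_lt_reg_r (INR (S j))); auto.
    replace ((y - 1 / INR (S j)) * INR (S j)) with (y * INR (S j) - 1) by (field; lra).
    replace (INR i / INR (S j) * INR (S j)) with (INR i) by (field; lra). lra. }
  rewrite Rmin_right in Hn by lra.
  assert (Hr : 2 * (1 / INR (S j)) < eps).
  { apply (Rmult_lt_reg_r (INR (S j))); auto.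
    replace (2 * (1 / INR (S j)) * INR (S j)) with 2 by (field; lra).
    apply (Rmult_lt_reg_l (/ eps)). apply Rinv_0_lt_compat; lra.
    replace (/ eps * (eps * INR (S j))) with (INR (S j)) by (field; lra).
    unfold Rdiv in Hj. lra. }
  apply Rabs_def2 in Hn. apply Rabs_def1; lra.
Qed.
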